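(* Let $a\in[0,1/2]$, $\epsilon>0$ and $\mathcal O=[a-\epsilon,a+\epsilon]\cap[0,1/2]$. There exist $\eta>0$ and $N\in\mathbb N^*$ such that $$\inf_{z\in[0,1/2]}\mathbb P_z[Z_N\in\mathcal O]\ge\eta,$$ where under $\mathbb P_z$, $(Z_n)_{n\in\mathbb N}$ is a Markov chain with transition kernel $M$ and $Z_0=z$.
   Context: $M$ is the Markov kernel $M(x,\cdot)=\frac16\sum_{i=1}^6\delta_{z_i(x)}$ on $[0,1/2]$, where for $x\in[0,1/2]$: $z_1(x)=\frac{3x}{2+2x}$; $z_2(x)=\frac{3x}{2-x}$ if $x<2/7$ and $\frac{2-4x}{2-x}$ if $x\ge2/7$; $z_3(x)=\frac{1+x}{3-3x}$ if $x<1/5$ and $\frac{2-4x}{3-3x}$ if $x\ge1/5$; $z_4(x)=\frac{1+x}{4-2x}$; $z_5(x)=\frac{1-2x}{4-2x}$; $z_6(x)=\frac{1-2x}{3}$. *)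

(* Defs.v *)
From Stdlib Require Import Reals ClassicalEpsilon.
Open Scope R_scope.

Definition z1 (x : R) : R := 3 * x / (2 + 2 * x).
Definition z2 (x : R) : R :=
  if Rlt_dec x (2/7) then 3 * x / (2 - x) else (2 - 4 * x) / (2 - x).
Definition z3 (x : R) : R :=
  if Rlt_dec x (1/5) then (1 + x) / (3 - 3 * x) else (2 - 4 * x) / (3 - 3 * x).
Definition z4 (x : R) : R := (1 + x) / (4 - 2 * x).
Definition z5 (x : R) : R := (1 - 2 * x) / (4 - 2 * x).
Definition z6 (x : R) : R := (1 - 2 * x) / 3.

Definition indic (A : R -> Prop) (x : R) : R :=
  if excluded_middle_informative (A x) then 1 else 0.

(* chain_prob n z A = P_z[Z_n \in A] for the Markov chain (Z_n) with kernel
   M(x,.) = (1/6) sum_{i=1}^6 delta_{z_i(x)} started at Z_0 = z, computed by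
   the first-step (Chapman-Kolmogorov) recursion
   P_z[Z_{n+1} \in A] = sum_y M(z,{y}) P_y[Z_n \in A]. *)
Fixpoint chain_prob (n : nat) (z : R) (A : R -> Prop) : R :=
  match n with
  | O => indic A z
  | S m => / 6 * (chain_prob m (z1 z) A + chain_prob m (z2 z) A
                 + chain_prob m (z3 z) A + chain_prob m (z4 z) A
                 + chain_prob m (z5 z) A + chain_prob m (z6 z) A)
  end.

(* Main.v *)
Require Import Defs.
From Stdlib Require Import Reals Lra Psatz ClassicalEpsilon.
Open Scope R_scope.

Lemma indic_bounds A x : 0 <= indic A x <= 1.
Proof. unfold indic; destruct excluded_middle_informative; lra. Qed.

Lemma chain_nonneg n : forall z A, 0 <= chain_prob n z A.
Proof.
  induction n as [|n IH]; intros z A; simpl.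
  - apply indic_bounds.
  - pose proof (IH (z1 z) A); pose proof (IH (z2 z) A); pose proof (IH (z3 z) A);
    pose proof (IH (z4 z) A); pose proof (IH (z5 z) A); pose proof (IH (z6 z) A).
    lra.
Qed.

Lemma chain_mono n : forall z (A B : R -> Prop), (forall x, A x -> B x) ->
  chain_prob n z A <= chain_prob n z B.
Proof.
  induction n as [|n IH]; intros z A B HAB; simpl.
  - unfold indic; destruct excluded_middle_informative as [h|h];
      destruct excluded_middle_informative as [h'|h']; try lra.
    exfalso; apply h'; auto.
  - pose proof (IH (z1 z) A B HAB); pose proof (IH (z2 z) A B HAB);
    pose proof (IH (z3 z) A B HAB); pose proof (IH (z4 z) A B HAB);
    pose proof (IH (z5 z) A B HAB); pose proof (IH (z6 z) A B HAB).
    lra.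
Qed.

Lemma chain_last4 n : forall z A,
  / 6 * chain_prob n z (fun y => A (z4 y)) <= chain_prob (S n) z A.
Proof.
  induction n as [|n IH]; intros z A.
  - change (/ 6 * indic A (z4 z) <= chain_prob 1 z A). simpl.
    pose proof (indic_bounds A (z1 z)); pose proof (indic_bounds A (z2 z));
    pose proof (indic_bounds A (z3 z)); pose proof (indic_bounds A (z5 z));
    pose proof (indic_bounds A (z6 z)). lra.
  - change (/ 6 * (/ 6 * (chain_prob n (z1 z) (fun y => A (z4 y)) + chain_prob n (z2 z) (fun y => A (z4 y))
      + chain_prob n (z3 z) (fun y => A (z4 y)) + chain_prob n (z4 z) (fun y => A (z4 y))
      + chain_prob n (z5 z) (fun y => A (z4 y)) + chain_prob n (z6 z) (fun y => A (z4 y))))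
      <= / 6 * (chain_prob (S n) (z1 z) A + chain_prob (S n) (z2 z) A + chain_prob (S n) (z3 z) A
        + chain_prob (S n) (z4 z) A + chain_prob (S n) (z5 z) A + chain_prob (S n) (z6 z) A)).
    pose proof (IH (z1 z) A); pose proof (IH (z2 z) A); pose proof (IH (z3 z) A);
    pose proof (IH (z4 z) A); pose proof (IH (z5 z) A); pose proof (IH (z6 z) A).
    lra.
Qed.

Lemma chain_last5 n : forall z A,
  / 6 * chain_prob n z (fun y => A (z5 y)) <= chain_prob (S n) z A.
Proof.
  induction n as [|n IH]; intros z A.
  - change (/ 6 * indic A (z5 z) <= chain_prob 1 z A). simpl.
    pose proof (indic_bounds A (z1 z)); pose proof (indic_bounds A (z2 z));
    pose proof (indic_bounds A (z3 z)); pose proof (indic_bounds A (z4 z));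
    pose proof (indic_bounds A (z6 z)). lra.
  - change (/ 6 * (/ 6 * (chain_prob n (z1 z) (fun y => A (z5 y)) + chain_prob n (z2 z) (fun y => A (z5 y))
      + chain_prob n (z3 z) (fun y => A (z5 y)) + chain_prob n (z4 z) (fun y => A (z5 y))
      + chain_prob n (z5 z) (fun y => A (z5 y)) + chain_prob n (z6 z) (fun y => A (z5 y))))
      <= / 6 * (chain_prob (S n) (z1 z) A + chain_prob (S n) (z2 z) A + chain_prob (S n) (z3 z) A
        + chain_prob (S n) (z4 z) A + chain_prob (S n) (z5 z) A + chain_prob (S n) (z6 z) A)).
    pose proof (IH (z1 z) A); pose proof (IH (z2 z) A); pose proof (IH (z3 z) A);
    pose proof (IH (z4 z) A); pose proof (IH (z5 z) A); pose proof (IH (z6 z) A).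
    lra.
Qed.

Lemma lip4 y b r : 0 <= y <= 1/2 -> 0 <= b <= 1/2 -> 0 <= r -> b - r <= y <= b + r ->
  (z4 b - 2/3 * r <= z4 y <= z4 b + 2/3 * r) /\ (0 <= z4 y <= 1/2).
Proof.
  intros Hy Hb Hr Hyb. unfold z4.
  set (u := / (4 - 2 * y)). set (v := / (4 - 2 * b)).
  assert (Hu : u * (4 - 2 * y) = 1) by (unfold u; field; lra).
  assert (Hv : v * (4 - 2 * b) = 1) by (unfold v; field; lra).
  assert (u > 0) by (unfold u; apply Rinv_0_lt_compat; lra).
  assert (v > 0) by (unfold v; apply Rinv_0_lt_compat; lra).
  assert (u <= 1/3) by nra. assert (v <= 1/3) by nra.
  assert (E : (1 + y) / (4 - 2 * y) - (1 + b) / (4 - 2 * b) = 6 * (y - b) * (u * v))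
    by (unfold u, v; field; lra).
  assert (0 < u * v) by nra. assert (u * v <= 1/9) by nra.
  assert (P1 : 0 <= (r - (y - b)) * (u * v)) by nra.
  assert (P2 : 0 <= (r + (y - b)) * (u * v)) by nra.
  assert (P3 : 0 <= r * (1/9 - u * v)) by nra.
  assert (Z : (1 + y) / (4 - 2 * y) = (1 + y) * u) by reflexivity.
  split; [split|split]; try nra.
Qed.

Lemma lip5 y b r : 0 <= y <= 1/2 -> 0 <= b <= 1/2 -> 0 <= r -> b - r <= y <= b + r ->
  (z5 b - 2/3 * r <= z5 y <= z5 b + 2/3 * r) /\ (0 <= z5 y <= 1/2).
Proof.
  intros Hy Hb Hr Hyb. unfold z5.
  set (u := / (4 - 2 * y)). set (v := / (4 - 2 * b)).
  assert (Hu : u * (4 - 2 * y) = 1) by (unfold u; field; lra).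
  assert (Hv : v * (4 - 2 * b) = 1) by (unfold v; field; lra).
  assert (u > 0) by (unfold u; apply Rinv_0_lt_compat; lra).
  assert (v > 0) by (unfold v; apply Rinv_0_lt_compat; lra).
  assert (u <= 1/3) by nra. assert (v <= 1/3) by nra.
  assert (E : (1 - 2 * y) / (4 - 2 * y) - (1 - 2 * b) / (4 - 2 * b) = - 6 * (y - b) * (u * v))
    by (unfold u, v; field; lra).
  assert (0 < u * v) by nra. assert (u * v <= 1/9) by nra.
  assert (P1 : 0 <= (r - (y - b)) * (u * v)) by nra.
  assert (P2 : 0 <= (r + (y - b)) * (u * v)) by nra.
  assert (P3 : 0 <= r * (1/9 - u * v)) by nra.
  assert (Z : (1 - 2 * y) / (4 - 2 * y) = (1 - 2 * y) * u) by reflexivity.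
  split; [split|split]; try nra.
Qed.

Lemma key n : forall a z, 0 <= a <= 1/2 -> 0 <= z <= 1/2 ->
  (/ 6) ^ n <= chain_prob n z
    (fun x => (a - (2/3)^n/2 <= x <= a + (2/3)^n/2) /\ (0 <= x <= 1/2)).
Proof.
  induction n as [|n IH]; intros a z Ha Hz.
  - simpl. unfold indic; destruct excluded_middle_informative as [h|h]; [lra|exfalso; apply h; lra].

  - assert (Hr : 0 <= (2/3)^n/2) by (pose proof (pow_le (2/3) n); lra).
    replace ((/ 6) ^ S n) with (/ 6 * (/ 6) ^ n) by (simpl; ring).
    replace ((2/3) ^ S n / 2) with (2/3 * ((2/3)^n/2)) by (simpl; field).
    set (r := (2/3)^n/2) in *.
    destruct (Rle_lt_dec (1/4) a) as [H4|H4].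
    + set (b := (4 * a - 1) / (1 + 2 * a)).
      assert (Hb : 0 <= b <= 1/2).
      { unfold b. split.
        - apply Rmult_le_pos; [lra| left; apply Rinv_0_lt_compat; lra].
        - apply Rmult_le_reg_r with (1 + 2 * a); [lra|].
          unfold Rdiv; rewrite Rmult_assoc, Rinv_l; lra. }
      assert (Eb : z4 b = a) by (unfold z4, b; field; lra).
      eapply Rle_trans; [|apply chain_last4].
      apply Rmult_le_compat_l; [lra|].
      eapply Rle_trans; [apply (IH b z Hb Hz)|].
      apply chain_mono. intros y [Hy1 Hy2].
      destruct (lip4 y b r Hy2 Hb Hr Hy1) as [L1 L2]. rewrite Eb in L1. tauto.
    + set (b := (1 - 4 * a) / (2 - 2 * a)).
      assert (Hb : 0 <= b <= 1/2).
      { unfold b. split.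
        - apply Rmult_le_pos; [lra| left; apply Rinv_0_lt_compat; lra].
        - apply Rmult_le_reg_r with (2 - 2 * a); [lra|].
          unfold Rdiv; rewrite Rmult_assoc, Rinv_l; lra. }
      assert (Eb : z5 b = a) by (unfold z5, b; field; lra).
      eapply Rle_trans; [|apply chain_last5].
      apply Rmult_le_compat_l; [lra|].
      eapply Rle_trans; [apply (IH b z Hb Hz)|].
      apply chain_mono. intros y [Hy1 Hy2].
      destruct (lip5 y b r Hy2 Hb Hr Hy1) as [L1 L2]. rewrite Eb in L1. tauto.
Qed.

Theorem lemma20 (a eps : R) :
  0 <= a <= 1/2 -> 0 < eps ->
  exists eta : R, 0 < eta /\
  exists N : nat, (1 <= N)%nat /\
    forall z : R, 0 <= z <= 1/2 ->
      eta <= chain_prob N z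
               (fun x => (a - eps <= x <= a + eps) /\ (0 <= x <= 1/2)).
Proof.
  intros Ha Heps.
  destruct (pow_lt_1_zero (2/3) ltac:(rewrite Rabs_pos_eq; lra) eps Heps) as [N0 HN0].
  set (N := S N0).
  exists ((/ 6) ^ N). split.
  { apply pow_lt; lra. }
  exists N. split; [unfold N; lia|].
  intros z Hz.
  eapply Rle_trans; [apply (key N a z Ha Hz)|].
  apply chain_mono. intros x [Hx1 Hx2]. split; [|exact Hx2].
  specialize (HN0 N ltac:(unfold N; lia)).
  rewrite Rabs_pos_eq in HN0 by (apply pow_le; lra).
  pose proof (pow_le (2/3) N ltac:(lra)). lra.
Qed.
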